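(* Let $\vec{\alpha}=\langle\alpha_s:s\in[\mathbb{N}]^{<\infty}\rangle$ be a sequence of nonstandard hypernatural numbers. Every subset of $[\mathbb{N}]^\infty$ that is open in the $\vec{\alpha}$-Ellentuck topology is $\vec{\alpha}$-Ramsey.
   Context: Setting (Alpha-Theory of Benci–Di Nasso): ZFC together with a new symbol $\alpha$ satisfying: ($\alpha$1) every sequence $\varphi=\langle\varphi_i:i\in\mathbb{N}\rangle$ has a unique ideal value $\varphi[\alpha]$; ($\alpha$2) if $\varphi[\alpha]=\psi[\alpha]$ and $f\circ\varphi$, $f\circ\psi$ make sense then $(f\circ\varphi)[\alpha]=(f\circ\psi)[\alpha]$; ($\alpha$3) constant real sequences $r$ have ideal value $r$, and $\langle i\rangle$ has ideal value $\alpha\notin\mathbb{N}$; ($\alpha$4) if $\vartheta_i=\{\varphi_i,\psi_i\}$ then $\vartheta[\alpha]=\{\varphi[\alpha],\psi[\alpha]\}$; ($\alpha$5) the constant sequence $\emptyset$ has ideal value $\emptyset$, and for nonempty $\psi_i$, $\psi[\alpha]=\{\vartheta[\alpha]:\vartheta_i\in\psi_i\ \forall i\}$. ${}^*A$ is the ideal value of the constant sequence $A$; elements of ${}^*\mathbb{N}\setminus\mathbb{N}$ are nonstandard hypernatural numbers. For finite $s$, $s\sqsubseteq X$ means $s=\{j\in X:j\le i\}$ for some $i$. A tree on $\mathbb{N}$ is a nonempty $T\subseteq[\mathbb{N}]^{<\infty}$ closed under $\sqsubseteq$-initial segments; $[T]=\{X\in[\mathbb{N}]^\infty:$ every finite $s\sqsubseteq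 X$ is in $T\}$; stem $st(T)$ = $\sqsubseteq$-maximal $s\in T$ comparable with all elements of $T$; $T/s=\{t\in T:s\sqsubseteq t\}$. An $\vec{\alpha}$-tree is a tree $T$ with a stem, $T/st(T)\neq\emptyset$, and $s\cup\{\alpha_s\}\in{}^*T$ for all $s\in T/st(T)$. $\mathcal{X}\subseteq[\mathbb{N}]^\infty$ is $\vec{\alpha}$-Ramsey if for every $\vec{\alpha}$-tree $T$ there is an $\vec{\alpha}$-tree $S\subseteq T$ with $st(S)=st(T)$ and $[S]\subseteq\mathcal{X}$ or $[S]\cap\mathcal{X}=\emptyset$. The $\vec{\alpha}$-Ellentuck topology on $[\mathbb{N}]^\infty$ is the topology with basis $\{[T]:T\text{ an }\vec{\alpha}\text{-tree}\}$. *)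

(* Defs.v *)
(* Model of Alpha-Theory via its ultrapower
   representation: U = U_alpha = {A : alpha \in *A} is a nonprincipal
   ultrafilter on nat, every hypernatural is phi[alpha] for some phi : nat -> nat,
   and phi[alpha] \in *A  iff  {i | phi i \in A} \in U. *)
From mathcomp Require Import all_boot finmap.
Set Implicit Arguments. Unset Strict Implicit. Unset Printing Implicit Defensive.
Local Open Scope fset_scope.

Definition is_ultrafilter (U : (nat -> Prop) -> Prop) : Prop :=
  [/\ U (fun _ => True), ~ U (fun _ => False),
      (forall A B : nat -> Prop, (forall i, A i -> B i) -> U A -> U B),
      (forall A B : nat -> Prop, U A -> U B -> U (fun i => A i /\ B i)) &
      (forall A : nat -> Prop, U A \/ U (fun i => ~ A i))].

Definition nonprincipal (U : (nat -> Prop) -> Prop) : Prop :=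
  forall n : nat, ~ U (fun i => i = n).

Definition nonstandard (U : (nat -> Prop) -> Prop) (phi : nat -> nat) : Prop :=
  forall n : nat, ~ U (fun i => phi i = n).

Definition infinite_set (X : nat -> Prop) : Prop :=
  forall n, exists m, n <= m /\ X m.

Definition initseg (s : {fset nat}) (X : nat -> Prop) : Prop :=
  (forall j, j \in s -> X j) /\
  (forall j k, X j -> k \in s -> j <= k -> j \in s).

Definition finseg (s t : {fset nat}) : Prop := initseg s (fun j => j \in t).

Definition is_tree (T : {fset nat} -> Prop) : Prop :=
  (exists s, T s) /\ (forall s t, T t -> finseg s t -> T s).

Definition body (T : {fset nat} -> Prop) (X : nat -> Prop) : Prop :=
  infinite_set X /\ forall s : {fset nat}, initseg s X -> T s.

Definition comparable (s t : {fset nat}) : Prop := finseg s t \/ finseg t s.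

Definition is_stem (T : {fset nat} -> Prop) (s : {fset nat}) : Prop :=
  [/\ T s, (forall t, T t -> comparable s t) &
      (forall s', T s' -> (forall t, T t -> comparable s' t) -> finseg s' s)].

(* alpha-vector tree, for alpha_s = (a s)[alpha] *)
Definition alpha_tree (U : (nat -> Prop) -> Prop) (a : {fset nat} -> nat -> nat)
  (T : {fset nat} -> Prop) : Prop :=
  is_tree T /\
  exists st, [/\ is_stem T st,
    (exists t, T t /\ finseg st t) &
    (forall s, T s -> finseg st s -> U (fun i => T (s `|` [fset a s i])))].

Definition alpha_Ramsey (U : (nat -> Prop) -> Prop) (a : {fset nat} -> nat -> nat)
  (O : (nat -> Prop) -> Prop) : Prop :=
  forall T, alpha_tree U a T ->
    exists S, [/\ alpha_tree U a S, (forall s, S s -> T s),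
      (forall st, is_stem T st -> is_stem S st) &
      ((forall X, body S X -> O X) \/ (forall X, body S X -> ~ O X))].

(* open in the alpha-Ellentuck topology: a union of basic sets [T] *)
Definition alpha_open (U : (nat -> Prop) -> Prop) (a : {fset nat} -> nat -> nat)
  (O : (nat -> Prop) -> Prop) : Prop :=
  (forall X, O X -> infinite_set X) /\
  forall X, O X -> exists T, [/\ alpha_tree U a T, body T X &
                                 forall Y, body T Y -> O Y].

(* Main.v *)
Require Import Defs.
From mathcomp Require Import all_boot finmap.
From Stdlib Require Import Classical ClassicalEpsilon.
Set Implicit Arguments. Unset Strict Implicit. Unset Printing Implicit Defensive.
Local Open Scope fset_scope.

Lemma finseg_refl s : finseg s s.
Proof. by split. Qed.

Lemma finseg_trans s t v : finseg s t -> finseg t v -> finseg s v.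
Proof.
move=> [h1 h2] [h3 h4]; split; first by move=> j /h1 /h3.
move=> j k jv ks jk; apply: (h2 j k _ ks jk).
apply: (h4 j k jv (h1 _ ks) jk).
Qed.

Lemma finseg_antisym s t : finseg s t -> finseg t s -> s = t.
Proof.
move=> [h1 _] [h2 _]; apply/fsetP => j; apply/idP/idP; [exact: h1|exact: h2].
Qed.

Lemma initseg_comp s v X : initseg s X -> initseg v X -> Defs.comparable s v.
Proof.
move=> [h1 h2] [h3 h4].
case: (classic (exists x, x \in s /\ x \notin v)) => [[x [xs xv]]|H].
- right; split.
  + move=> k kv; case: (leqP x k) => xk.
    * by rewrite (h4 x k (h1 x xs) kv xk) in xv.
    * exact: (h2 k x (h3 k kv) xs (ltnW xk)).
  + move=> j k js kv jk; exact: (h4 j k (h1 j js) kv jk).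
- left; split.
  + move=> j js; apply/negPn/negP => jv; apply: H; by exists j.
  + move=> j k jv ks jk; exact: (h2 j k (h3 j jv) ks jk).
Qed.

Lemma finseg_comp s v t : finseg s t -> finseg v t -> Defs.comparable s v.
Proof. exact: initseg_comp. Qed.

Lemma bound_fset (w : {fset nat}) : exists m, forall j, j \in w -> j <= m.
Proof.
have : forall (l : seq nat), exists m, forall j, j \in l -> j <= m.
  elim=> [|x l [m Hm]]; first by exists 0.
  exists (maxn x m) => j; rewrite inE => /orP [/eqP->|/Hm jm].
  - exact: leq_maxl.
  - exact: leq_trans jm (leq_maxr _ _).
move/(_ (enum_fset w)) => [m Hm]; exists m => j jw; exact: Hm.
Qed.

Lemma finseg_ext u w y : finseg u w -> (forall j, j \in w -> j < y) ->
  finseg u (w `|` [fset y]).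
Proof.
move=> [h1 h2] hy; split.
- by move=> j /h1 jw; rewrite in_fsetU jw.
- move=> j k; rewrite in_fsetU in_fset1 => /orP [jw|/eqP ->] ku jk.
  + exact: h2 jw ku jk.
  + have := hy k (h1 k ku); rewrite ltnNge jk //.
Qed.

Lemma finseg_between w v y : finseg w v -> finseg v (w `|` [fset y]) ->
  v = w \/ v = w `|` [fset y].
Proof.
move=> [h1 _] [h3 _].
case: (boolP (y \in v)) => yv.
- right; apply/fsetP => j; apply/idP/idP; first exact: h3.
  by rewrite in_fsetU in_fset1 => /orP [/h1|/eqP ->].
- left; apply/fsetP => j; apply/idP/idP; last exact: h1.
  move=> jv; move: (h3 j jv); rewrite in_fsetU in_fset1 => /orP [//|/eqP jy].
  by move: yv; rewrite -jy jv.
Qed.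

Definition pdec (P : Prop) : bool :=
  if excluded_middle_informative P then true else false.

Lemma pdecP P : pdec P = true <-> P.
Proof. rewrite /pdec; case: excluded_middle_informative => //. Qed.

Definition seg (X : nat -> Prop) n : {fset nat} :=
  seq_fset tt (filter (fun j => pdec (X j)) (iota 0 n.+1)).

Lemma in_seg X n j : j \in seg X n <-> (X j /\ j <= n).
Proof.
rewrite /seg seq_fsetE mem_filter mem_iota add0n ltnS /=.
split => [/andP [/pdecP h ->]//|[h ->]]; by rewrite andbT; apply/pdecP.
Qed.

Lemma seg_initseg X n : initseg (seg X n) X.
Proof.
split; first by move=> j /in_seg [].
move=> j k Xj /in_seg [_ kn] jk; apply/in_seg; split=> //; exact: leq_trans jk kn.
Qed.

Lemma seg_above u X n : initseg u X -> X n -> (forall j, j \in u -> j < n) ->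
  finseg u (seg X n).
Proof.
move=> hu Xn hn; case: (initseg_comp hu (seg_initseg X n)) => // [[h _]].
have : n \in seg X n by apply/in_seg.
by move/h/hn; rewrite ltnn.
Qed.

Lemma initseg_of_seg u X n : finseg u (seg X n) -> initseg u X.
Proof.
move=> [h1 h2]; split; first by move=> j /h1 /in_seg [].
move=> j k Xj ku jk; apply: (h2 j k _ ku jk).
move: (h1 k ku) => /in_seg [_ kn]; apply/in_seg; split=> //; exact: leq_trans jk kn.
Qed.

Lemma above_elem X (w : {fset nat}) : infinite_set X ->
  exists n, X n /\ forall j, j \in w -> j < n.
Proof.
move=> hX; case: (bound_fset w) => m hm; case: (hX m.+1) => n [mn Xn].
exists n; split=> // j /hm jm; exact: leq_ltn_trans jm mn.
Qed.

Lemma stem_initseg T s X : (forall t, T t -> Defs.comparable s t) -> body T X -> initseg s X.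
Proof.
move=> hc [hX hT]; case: (above_elem s hX) => n [Xn hn].
case: (hc _ (hT _ (seg_initseg X n))) => h; first exact: initseg_of_seg h.
case: h => h _; have : n \in seg X n by apply/in_seg.
by move/h/hn; rewrite ltnn.
Qed.

Lemma U_mono U A B : is_ultrafilter U -> (forall i, A i -> B i) -> U A -> U B.
Proof. by case=> _ _ h _ _; apply: h. Qed.

Lemma U_and U A B : is_ultrafilter U -> U A -> U B -> U (fun i => A i /\ B i).
Proof. by case=> _ _ _ h _; apply: h. Qed.

Lemma U_ex U A : is_ultrafilter U -> U A -> exists i, A i.
Proof.
move=> hU UA; apply: NNPP => H; case: hU => _ hF hm _ _; apply: hF.
apply: (hm A) UA => i Ai; apply: H; by exists i.
Qed.

Lemma U_gt U phi : is_ultrafilter U -> nonstandard U phi ->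
  forall m, U (fun i => m < phi i).
Proof.
move=> hU hn; have hc := hU; case: hc => _ _ _ _ hsplit.
elim=> [|m IH].
- case: (hsplit (fun i => phi i = 0)) => h; first by case: (hn 0 h).
  apply: U_mono h => // i; by case: (phi i).
- case: (hsplit (fun i => phi i = m.+1)) => h; first by case: (hn _ h).
  apply: U_mono (U_and hU IH h) => // i [h1 h2].
  rewrite ltn_neqAle h1 andbT; apply/eqP => e; by apply: h2.
Qed.

Lemma U_above U phi (w : {fset nat}) : is_ultrafilter U -> nonstandard U phi ->
  U (fun i => forall j, j \in w -> j < phi i).
Proof.
move=> hU hn; case: (bound_fset w) => m hm.
apply: U_mono (U_gt hU hn m) => // i h j /hm jm; exact: leq_ltn_trans jm h.
Qed.

Lemma tree_closed T s t : is_tree T -> T t -> finseg s t -> T s.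
Proof. by case=> _ h; apply: h. Qed.

Lemma mk_tree U a T (u : {fset nat}) (P : {fset nat} -> Prop) :
  is_ultrafilter U -> (forall s, nonstandard U (a s)) ->
  is_tree T -> T u -> (forall v, P v -> T v) -> P u ->
  (forall v w, P w -> finseg u v -> finseg v w -> P v) ->
  (forall w, P w -> finseg u w -> U (fun i => P (w `|` [fset a w i]))) ->
  let S := fun v => finseg v u \/ (finseg u v /\ P v) in
  [/\ alpha_tree U a S, is_stem S u & forall v, S v -> T v].
Proof.
move=> hU hn hT Tu PT Pu Pdown Psucc S.
have Su : S u by left; exact: finseg_refl.
have stem : is_stem S u.
  split=> //.
  - by move=> t [h|[h _]]; [right|left].
  - move=> s' [//|[us' Ps']] hc.
    case: (classic (exists x, x \in s' /\ x \notin u)) => [[x [xs xu]]|H].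
    + have := U_and hU (Psucc u Pu (finseg_refl u)) (U_above s' hU (hn u)).
      move/(U_ex hU) => [i [Pi hi]].
      set y := a u i in Pi hi.
      have ht : S (u `|` [fset y]).
        right; split=> //; apply: finseg_ext (finseg_refl u) _.
        move=> j ju; apply: hi; by case: us' => h _; apply: h.
      case: (hc _ ht) => [[h _]|[h _]].
      * move: (h x xs); rewrite in_fsetU in_fset1 (negbTE xu) /= => /eqP e.
        by move: (hi x xs); rewrite e ltnn.
      * have : y \in u `|` [fset y] by rewrite in_fsetU in_fset1 eqxx orbT.
        by move/h/hi; rewrite ltnn.
    + split.
      * move=> j js; apply/negPn/negP => ju; apply: H; by exists j.
      * move=> j k ju _ _; by case: us' => h _; apply: h.
split=> //; last first.
  move=> v [h|[_ h]]; [exact: tree_closed hT Tu h | exact: PT].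
split.
  split; first by exists u.
  move=> s t [h|[ut Pt]] st.
  - left; exact: finseg_trans st h.
  - case: (finseg_comp st ut) => h; first by left.
    right; split=> //; exact: Pdown Pt h st.
exists u; split=> //; first by exists u; split=> //; exact: finseg_refl.
move=> s Ss us.
have Ps : P s.
  case: Ss => [h|[_ //]]; exact: Pdown Pu us h.
apply: U_mono (U_and hU (Psucc s Ps us) (U_above s hU (hn s))) => // i [h1 h2].
right; split=> //; exact: finseg_ext us h2.
Qed.

Lemma stem_unique T s1 s2 : is_stem T s1 -> is_stem T s2 -> s1 = s2.
Proof.
move=> [h1 h2 h3] [h4 h5 h6]; apply: finseg_antisym.
- exact: h6 h1 h2.
- exact: h3 h4 h5.
Qed.

Definition good U a T O (u : {fset nat}) : Prop :=
  exists S, [/\ alpha_tree U a S, (forall v, S v -> T v), is_stem S u &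
                forall X, body S X -> O X].

Lemma notin_lt (w : {fset nat}) y : (forall j, j \in w -> j < y) -> y \notin w.
Proof. by move=> h; apply/negP => /h; rewrite ltnn. Qed.

Lemma good_union U a T O w :
  is_ultrafilter U -> (forall s, nonstandard U (a s)) -> is_tree T -> T w ->
  U (fun i => good U a T O (w `|` [fset a w i])) -> good U a T O w.
Proof.
move=> hU hn hT Tw hG.
pose GV y := good U a T O (w `|` [fset y]) /\ forall j, j \in w -> j < y.
have H : forall y, exists S, GV y ->
   [/\ alpha_tree U a S, (forall v, S v -> T v), is_stem S (w `|` [fset y]) &
                forall X, body S X -> O X].
  move=> y; case: (classic (GV y)) => [[[S hS] _]|nG]; first by exists S.
  by exists (fun _ => True) => /nG.
pose Sf y := proj1_sig (constructive_indefinite_description _ (H y)).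
have hSf : forall y, GV y -> [/\ alpha_tree U a (Sf y), (forall v, Sf y v -> T v),
    is_stem (Sf y) (w `|` [fset y]) & forall X, body (Sf y) X -> O X].
  move=> y; rewrite /Sf; case: constructive_indefinite_description => //.
pose P v := v = w \/ exists y, [/\ GV y, Sf y v & finseg (w `|` [fset y]) v].
have PT : forall v, P v -> T v.
  move=> v [->//|[y [gy sv _]]]; by case: (hSf y gy) => _ h _ _; apply: h.
have Pw : P w by left.
have Pdown : forall v w', P w' -> finseg w v -> finseg v w' -> P v.
  move=> v w' [->|[y [gy sw' yw']]] wv vw'.
  - left; exact: finseg_antisym.
  - case: (hSf y gy) => [[[_ htr] _] _ [hst _ _] _].
    case: (finseg_comp vw' yw') => h.
    + case: (finseg_between wv h) => ->; first by left.
      right; exists y; split=> //; exact: finseg_refl.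
    + right; exists y; split=> //; exact: htr sw' vw'.
have Psucc : forall v, P v -> finseg w v -> U (fun i => P (v `|` [fset a v i])).
  move=> v [->|[y [gy sv yv]]] wv.
  - apply: U_mono (U_and hU hG (U_above w hU (hn w))) => // i [g1 g2].
    right; exists (a w i); have gy : GV (a w i) by [].
    split; [done| |apply: finseg_refl].
    by case: (hSf _ gy) => _ _ [].
  - case: (hSf y gy) => [[_ [st0 [hst0 _ hs0]]] _ hstem _].
    rewrite (stem_unique hst0 hstem) in hs0.
    apply: U_mono (U_and hU (hs0 v sv yv) (U_above v hU (hn v))) => // i [g1 g2].
    right; exists y; split=> //; exact: finseg_ext yv g2.
have [hS hstem hST] := mk_tree hU hn hT Tw PT Pw Pdown Psucc.
set S := (fun v => _) in hS hstem hST.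
exists S; split=> // X hX.
have wX : initseg w X by apply: stem_initseg hX; case: hstem.
have [hinf hXS] := hX.
case: (above_elem w hinf) => n [Xn hnw].
have wv := seg_above wX Xn hnw.
have nv : n \in seg X n by apply/in_seg.
case: (hXS _ (seg_initseg X n)) => [[h _]|[_ [e|[y [gy sv yv]]]]].
- by move: (hnw n (h n nv)); rewrite ltnn.
- by move: nv; rewrite e => /hnw; rewrite ltnn.
case: (hSf y gy) => [[[_ htr] _] _ _ hO]; apply: hO; split=> // s sX.
case: (initseg_comp sX (seg_initseg X n)) => h; first exact: htr sv h.
case: (hXS s sX) => [h'|[_ [e|[y' [gy' sy' y's]]]]].
- exact: htr sv (finseg_trans h' wv).
- by rewrite e; exact: htr sv wv.
have ys := finseg_trans yv h.
suff -> : y = y' by [].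
case: gy => _ hy; case: gy' => _ hy'.
case: (finseg_comp ys y's) => [[hh _]|[hh _]].
- have : y \in w `|` [fset y] by rewrite in_fsetU in_fset1 eqxx orbT.
  move/hh; rewrite in_fsetU in_fset1 (negbTE (notin_lt hy)) /=; by move/eqP.
- have : y' \in w `|` [fset y'] by rewrite in_fsetU in_fset1 eqxx orbT.
  move/hh; rewrite in_fsetU in_fset1 (negbTE (notin_lt hy')) /=; by move/eqP.
Qed.

Theorem mainTheorem20 (U : (nat -> Prop) -> Prop) (a : {fset nat} -> nat -> nat)
  (O : (nat -> Prop) -> Prop) :
  is_ultrafilter U -> nonprincipal U ->
  (forall s, nonstandard U (a s)) ->
  alpha_open U a O -> alpha_Ramsey U a O.
Proof.
move=> hU _ hn [Oinf Oopen] T [hT [st [stT hex hsucc]]].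
have Tst : T st by case: stT.
case: (classic (good U a T O st)) => [[S [hS hST hstem hO]]|ng].
  exists S; split=> //; last by left.
  by move=> st1 h1; rewrite (stem_unique h1 stT).
pose P w := T w /\ forall v, finseg st v -> finseg v w -> ~ good U a T O v.
have PT : forall v, P v -> T v by move=> v [].
have Pst : P st.
  split=> // v h1 h2; by rewrite (finseg_antisym h2 h1).
have Pdown : forall v w, P w -> finseg st v -> finseg v w -> P v.
  move=> v w [Tw hw] sv vw; split; first exact: tree_closed hT Tw vw.
  move=> v' h1 h2; apply: hw h1 (finseg_trans h2 vw).
have Psucc : forall w, P w -> finseg st w -> U (fun i => P (w `|` [fset a w i])).
  move=> w [Tw hw] sw.
  have ngw : ~ good U a T O w by apply: hw sw (finseg_refl w).
  have hc := hU; case: hc => _ _ _ _ hsplit.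
  case: (hsplit (fun i => good U a T O (w `|` [fset a w i]))) => hg.
    by case: ngw; apply: good_union hU hn hT Tw hg.
  apply: U_mono (U_and hU (U_and hU (hsucc w Tw sw) hg) (U_above w hU (hn w))) => //.
  move=> i [[h1 h2] h3]; split=> // v h4 h5.
  have ww := finseg_ext (finseg_refl w) h3.
  case: (finseg_comp h5 ww) => h6; first exact: hw h4 h6.
  by case: (finseg_between h6 h5) => ->.
have [hS hstem hST] := mk_tree hU hn hT Tst PT Pst Pdown Psucc.
set S := (fun v => _) in hS hstem hST.
exists S; split=> //.
  by move=> st1 h1; rewrite (stem_unique h1 stT).
right=> X hX OX.
case: (Oopen X OX) => T' [[hT' [st' [st'T _ hsucc']]] hXT' hT'O].
have stX : initseg st X by apply: stem_initseg hX; case: hstem.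
have st'X : initseg st' X by apply: stem_initseg hXT'; case: st'T.
have [hinf hXS] := hX.
case: (above_elem (st `|` st') hinf) => n [Xn hnw].
have su : finseg st (seg X n).
  apply: seg_above stX Xn _ => j js; apply: hnw; by rewrite in_fsetU js.
have s'u : finseg st' (seg X n).
  apply: seg_above st'X Xn _ => j js; apply: hnw; by rewrite in_fsetU js orbT.
have nv : n \in seg X n by apply/in_seg.
set u := seg X n in su s'u nv.
have T'u : T' u by case: hXT' => _ h; apply: h; exact: seg_initseg.
case: (hXS u (seg_initseg X n)) => [[h _]|[_ [Tu hu]]].
  by move: (hnw n); rewrite in_fsetU (h n nv) => /(_ isT); rewrite ltnn.
apply: (hu u su (finseg_refl u)).
pose P' v := T v /\ T' v.
have P'T : forall v, P' v -> T v by move=> v [].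
have P'u : P' u by [].
have P'down : forall v w, P' w -> finseg u v -> finseg v w -> P' v.
  move=> v w [h1 h2] _ vw; split; [exact: tree_closed hT h1 vw|exact: tree_closed hT' h2 vw].
have P'succ : forall w, P' w -> finseg u w -> U (fun i => P' (w `|` [fset a w i])).
  move=> w [h1 h2] uw.
  exact: U_and hU (hsucc w h1 (finseg_trans su uw)) (hsucc' w h2 (finseg_trans s'u uw)).
have [hS' hstem' hS'T] := mk_tree hU hn hT Tu P'T P'u P'down P'succ.
set S' := (fun v => _) in hS' hstem' hS'T.
exists S'; split=> // X' [hinf' hX'].
apply: hT'O; split=> // s sX'.
case: (hX' s sX') => [h|[_ [_ h]]] //; exact: tree_closed hT' T'u h.
Qed.
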